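(* Let $(\mathbf A,G,H)$ be a tense Pavelka algebra whose underlying Pavelka algebra $\mathbf A$ is semisimple. The following are equivalent: (i) $G(x)\cdot G(y)\le G(x\cdot y)$ for all $x,y\in A$; (ii) $H(x)\cdot H(y)\le H(x\cdot y)$ for all $x,y\in A$; (iii) the natural time frame of $(\mathbf A,G,H)$ is boolean, i.e. $R(F,F')=\bigwedge_{a\in A}(G(a)/F'\rightarrow a/F)\in\{0,1\}$ for all $F,F'\in\mathrm{Spec_M}\mathbf A$; (iv) $G$ and $H$ are tense operators on the MV-reduct $(A;\oplus,\neg,\mathbf 0)$ in the sense of tense MV-algebras, i.e. for all $x,y\in A$: (T1) $G(1)=H(1)=1$; (T2) $G(x)\cdot G(y)\le G(x\cdot y)$, $H(x)\cdot H(y)\le H(x\cdot y)$; (T3) $G(x)\oplus G(y)\le G(x\oplus y)$, $H(x)\oplus H(y)\le H(x\oplus y)$; (T4) $G(x)\cdot G(x)=G(x\cdot x)$, $H(x)\cdot H(x)=H(x\cdot x)$; (T5) $G(x)\oplus G(x)=G(x\oplus x)$, $H(x)\oplus H(x)=H(x\oplus x)$; (T6) $\neg G(\neg H(x))\le x$, $\neg H(\neg G(x))\le x$.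
   Context: An MV-algebra $(A;\oplus,\neg,0)$ carries derived operations $1=\neg0$, $x\cdot y=\neg(\neg x\oplus\neg y)$, $x\rightarrow y=\neg x\oplus y$, $x\vee y=\neg(\neg x\oplus y)\oplus y$, $x\wedge y=\neg(\neg x\vee\neg y)$, order $x\le y$ iff $\neg x\oplus y=1$. The standard MV-algebra is $[0,1]$ with $x\oplus y=\min\{x+y,1\}$, $\neg x=1-x$. A Pavelka algebra is $\mathbf A=(A;\oplus,\neg,\{\mathbf r\mid r\in[0,1]\cap\mathbb Q\})$ with $(A;\oplus,\neg,\mathbf 0)$ an MV-algebra, $\mathbf r\oplus\mathbf s=\mathbf t$ whenever $\min\{r+s,1\}=t$, $\neg\mathbf r=\mathbf s$ whenever $1-r=s$. Filters are filters of the MV-reduct; $\mathrm{Spec_M}\mathbf A$ is the set of maximal proper filters; for $F\in\mathrm{Spec_M}\mathbf A$, $\mathbf A/F$ embeds uniquely into $[0,1]$ and $x/F$ is identified with its image in $[0,1]$. Semisimple: MV-reduct is a subdirect product of simple MV-algebras. A tense Pavelka algebra is $(\mathbf A,G,H)$ with $G,H\colon A\to A$ such that for all $x,y$ and constants $\mathbf r$: (PT1) $G(x\wedge y)=G(x)\wedge G(y)$, $H(x\wedge y)=H(x)\wedge H(y)$; (PT2) $\mathbf r\rightarrow G(x)=G(\mathbf r\rightarrow x)$, $\mathbf r\rightarrow H(x)=H(\mathbf r\rightarrow x)$; (PT3) $\neg H(\neg G(x))\le x$, $\neg G(\neg H(x))\le x$. *)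

(* Defs.v *)
From Stdlib Require Import Reals QArith Qminmax.
Open Scope R_scope.

Record MVAlg := {
  car :> Type;
  mv_oplus : car -> car -> car;
  mv_neg : car -> car;
  mv_zero : car;
  mv_assoc : forall x y z, mv_oplus x (mv_oplus y z) = mv_oplus (mv_oplus x y) z;
  mv_comm : forall x y, mv_oplus x y = mv_oplus y x;
  mv_zero_r : forall x, mv_oplus x mv_zero = x;
  mv_negK : forall x, mv_neg (mv_neg x) = x;
  mv_one_abs : forall x, mv_oplus x (mv_neg mv_zero) = mv_neg mv_zero;
  mv_luk : forall x y, mv_oplus (mv_neg (mv_oplus (mv_neg x) y)) y
                     = mv_oplus (mv_neg (mv_oplus (mv_neg y) x)) x
}.

Arguments mv_oplus {m}. Arguments mv_neg {m}. Arguments mv_zero {m}.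

Section Derived.
Variable A : MVAlg.
Definition mv_one : A := mv_neg mv_zero.
Definition mv_mul (x y : A) : A := mv_neg (mv_oplus (mv_neg x) (mv_neg y)).
Definition mv_imp (x y : A) : A := mv_oplus (mv_neg x) y.
Definition mv_join (x y : A) : A := mv_oplus (mv_neg (mv_oplus (mv_neg x) y)) y.
Definition mv_meet (x y : A) : A := mv_neg (mv_join (mv_neg x) (mv_neg y)).
Definition mv_le (x y : A) : Prop := mv_oplus (mv_neg x) y = mv_one.

Definition is_filter (F : A -> Prop) : Prop :=
  F mv_one /\
  (forall x y, F x -> F y -> F (mv_mul x y)) /\
  (forall x y, F x -> mv_le x y -> F y).
Definition proper_filter (F : A -> Prop) : Prop := is_filter F /\ ~ F mv_zero.
Definition maximal_filter (F : A -> Prop) : Prop :=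
  proper_filter F /\
  forall F', proper_filter F' -> (forall x, F x -> F' x) -> forall x, F' x -> F x.

Definition filter_cong (F : A -> Prop) (x y : A) : Prop :=
  F (mv_imp x y) /\ F (mv_imp y x).
End Derived.

Arguments mv_one {A}. Arguments mv_mul {A}. Arguments mv_imp {A}.
Arguments mv_join {A}. Arguments mv_meet {A}. Arguments mv_le {A}.

Definition mv_simple (S : MVAlg) : Prop :=
  (mv_zero : S) <> mv_one /\
  forall F : S -> Prop, is_filter S F ->
    (forall x, F x -> x = mv_one) \/ (forall x, F x).

Definition mv_hom (A B : MVAlg) (f : A -> B) : Prop :=
  (forall x y, f (mv_oplus x y) = mv_oplus (f x) (f y)) /\
  (forall x, f (mv_neg x) = mv_neg (f x)) /\
  f mv_zero = mv_zero.

Definition mv_semisimple (A : MVAlg) : Prop :=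
  exists (I : Type) (S : I -> MVAlg) (e : A -> forall i, S i),
    (forall i, mv_simple (S i)) /\
    (forall i, mv_hom A (S i) (fun x => e x i)) /\
    (forall x y, e x = e y -> x = y) /\
    (forall i (s : S i), exists x, e x i = s).

Definition std_oplus (a b : R) : R := Rmin (a + b) 1.
Definition std_neg (a : R) : R := 1 - a.
Definition std_imp (a b : R) : R := Rmin 1 (1 - a + b).

(** [h] is the composite A -> A/F -> [0,1] of the canonical projection with an
    embedding of A/F into the standard MV-algebra: an MV-homomorphism into [0,1]
    whose kernel congruence is exactly the congruence of F.  Thus h x is x/F. *)
Definition quotient_embedding (A : MVAlg) (F : A -> Prop) (h : A -> R) : Prop :=
  (forall x, 0 <= h x <= 1) /\
  (forall x y, h (mv_oplus x y) = std_oplus (h x) (h y)) /\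
  (forall x, h (mv_neg x) = std_neg (h x)) /\
  h mv_zero = 0 /\
  (forall x y, h x = h y <-> filter_cong A F x y).

Definition inQ01 (r : Q) : Prop := (0 <= r)%Q /\ (r <= 1)%Q.
Definition is_pavelka (A : MVAlg) (c : Q -> A) : Prop :=
  c 0%Q = mv_zero /\
  (forall r s t, inQ01 r -> inQ01 s -> inQ01 t ->
     Qeq (Qminmax.Qmin (r + s) 1) t -> mv_oplus (c r) (c s) = c t) /\
  (forall r s, inQ01 r -> inQ01 s -> Qeq (1 - r) s -> mv_neg (c r) = c s).

Definition is_tense_pavelka (A : MVAlg) (c : Q -> A) (G H : A -> A) : Prop :=
  is_pavelka A c /\
  (forall x y, G (mv_meet x y) = mv_meet (G x) (G y)) /\
  (forall x y, H (mv_meet x y) = mv_meet (H x) (H y)) /\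
  (forall r x, inQ01 r -> mv_imp (c r) (G x) = G (mv_imp (c r) x)) /\
  (forall r x, inQ01 r -> mv_imp (c r) (H x) = H (mv_imp (c r) x)) /\
  (forall x, mv_le (mv_neg (H (mv_neg (G x)))) x) /\
  (forall x, mv_le (mv_neg (G (mv_neg (H x)))) x).

Definition is_inf (S : R -> Prop) (m : R) : Prop :=
  (forall y, S y -> m <= y) /\ (forall m', (forall y, S y -> m' <= y) -> m' <= m).

Definition natural_frame_boolean (A : MVAlg) (G : A -> A) : Prop :=
  forall (F F' : A -> Prop) (hF hF' : A -> R),
    maximal_filter A F -> maximal_filter A F' ->
    quotient_embedding A F hF -> quotient_embedding A F' hF' ->
    forall m, is_inf (fun v => exists a : A, v = std_imp (hF' (G a)) (hF a)) m ->
      m = 0 \/ m = 1.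

Definition is_tense_mv (A : MVAlg) (G H : A -> A) : Prop :=
  (G mv_one = mv_one /\ H mv_one = mv_one) /\
  (forall x y, mv_le (mv_mul (G x) (G y)) (G (mv_mul x y)) /\
               mv_le (mv_mul (H x) (H y)) (H (mv_mul x y))) /\
  (forall x y, mv_le (mv_oplus (G x) (G y)) (G (mv_oplus x y)) /\
               mv_le (mv_oplus (H x) (H y)) (H (mv_oplus x y))) /\
  (forall x, mv_mul (G x) (G x) = G (mv_mul x x) /\ mv_mul (H x) (H x) = H (mv_mul x x)) /\
  (forall x, mv_oplus (G x) (G x) = G (mv_oplus x x) /\ mv_oplus (H x) (H x) = H (mv_oplus x x)) /\
  (forall x, mv_le (mv_neg (G (mv_neg (H x)))) x /\ mv_le (mv_neg (H (mv_neg (G x)))) x).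

(* Main.v *)
Require Import Defs.
From Stdlib Require Import Reals QArith.
From Stdlib Require Import Qminmax Lra Lqa Qreals Classical Lia ZArith FunctionalExtensionality.
From mathcomp Require classical_sets boolp.
Ltac qlra := Stdlib.micromega.Lqa.lra.
Ltac rlra := Stdlib.micromega.Lra.lra.
Ltac rmm := unfold Rmin, Rmax in *; repeat destruct Rle_dec; rlra.

Local Notation "x ⊕ y" := (mv_oplus x y) (at level 50, left associativity).
Local Notation "x ⊙ y" := (mv_mul x y) (at level 40, left associativity).
Local Notation "¬ x" := (mv_neg x) (at level 35, right associativity).
Local Notation "x ≤ y" := (mv_le x y) (at level 70).


Section MV.
Lemma mv_negK' (A : MVAlg) (x : A) : ¬ ¬ x = x. Proof. apply mv_negK. Qed.
End MV.

Lemma oA {A : MVAlg} (x y z : A) : x ⊕ (y ⊕ z) = x ⊕ y ⊕ z. Proof. apply mv_assoc. Qed.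
Lemma oC {A : MVAlg} (x y : A) : x ⊕ y = y ⊕ x. Proof. apply mv_comm. Qed.
Lemma o0 {A : MVAlg} (x : A) : x ⊕ mv_zero = x. Proof. apply mv_zero_r. Qed.
Lemma nK {A : MVAlg} (x : A) : ¬ ¬ x = x. Proof. apply mv_negK. Qed.
Lemma o1 {A : MVAlg} (x : A) : x ⊕ mv_one = mv_one. Proof. apply mv_one_abs. Qed.
Lemma luk {A : MVAlg} (x y : A) : ¬ (¬ x ⊕ y) ⊕ y = ¬ (¬ y ⊕ x) ⊕ x. Proof. apply mv_luk. Qed.
Lemma oCA {A : MVAlg} (x y z : A) : x ⊕ (y ⊕ z) = y ⊕ (x ⊕ z).
Proof. rewrite !oA, (oC x y); reflexivity. Qed.
Lemma oAC {A : MVAlg} (x y z : A) : x ⊕ y ⊕ z = x ⊕ z ⊕ y.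
Proof. rewrite <- !oA, (oC y z); reflexivity. Qed.
Lemma zo {A : MVAlg} (x : A) : mv_zero ⊕ x = x. Proof. rewrite oC; apply o0. Qed.
Lemma one_o {A : MVAlg} (x : A) : mv_one ⊕ x = mv_one. Proof. rewrite oC; apply o1. Qed.
Lemma n1 {A : MVAlg} : ¬ (mv_one : A) = mv_zero. Proof. unfold mv_one; apply nK. Qed.
Lemma n0 {A : MVAlg} : ¬ (mv_zero : A) = mv_one. Proof. reflexivity. Qed.
Lemma compl {A : MVAlg} (x : A) : ¬ x ⊕ x = mv_one.
Proof.
  pose proof (luk x mv_one) as H. rewrite !o1 in H.
  rewrite n1, zo in H. symmetry; exact H.
Qed.
Lemma compl' {A : MVAlg} (x : A) : x ⊕ ¬ x = mv_one. Proof. rewrite oC; apply compl. Qed.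
Lemma le_refl {A : MVAlg} (x : A) : x ≤ x. Proof. apply compl. Qed.
Lemma le_1 {A : MVAlg} (x : A) : x ≤ mv_one. Proof. unfold mv_le; apply o1. Qed.
Lemma le_0 {A : MVAlg} (x : A) : mv_zero ≤ x. Proof. unfold mv_le; rewrite n0; apply one_o. Qed.
Lemma one_le {A : MVAlg} (x : A) : mv_one ≤ x -> x = mv_one.
Proof. unfold mv_le; rewrite n1, zo; auto. Qed.
Lemma join_le {A : MVAlg} (x y : A) : x ≤ y -> mv_join x y = y.
Proof. unfold mv_le, mv_join; intro H; rewrite H, n1, zo; auto. Qed.
Lemma join_comm {A : MVAlg} (x y : A) : mv_join x y = mv_join y x.
Proof. apply luk. Qed.
Lemma le_oplus_r {A : MVAlg} (x w : A) : x ≤ x ⊕ w.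
Proof. unfold mv_le. rewrite oA, compl. apply one_o. Qed.
Lemma le_oplus_l {A : MVAlg} (x w : A) : x ≤ w ⊕ x.
Proof. rewrite oC; apply le_oplus_r. Qed.
Lemma le_ex {A : MVAlg} (x y : A) : x ≤ y -> y = x ⊕ ¬ (¬ y ⊕ x).
Proof.
  intro H. rewrite <- (join_le _ _ H) at 1. rewrite join_comm. unfold mv_join.
  apply oC.
Qed.
Lemma le_antisym {A : MVAlg} (x y : A) : x ≤ y -> y ≤ x -> x = y.
Proof.
  intros H1 H2. rewrite <- (join_le _ _ H1). rewrite join_comm. symmetry. apply join_le; auto.
Qed.
Lemma le_trans {A : MVAlg} (x y z : A) : x ≤ y -> y ≤ z -> x ≤ z.
Proof.
  intros H1 H2. rewrite (le_ex _ _ H2), (le_ex _ _ H1). rewrite <- oA. apply le_oplus_r.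
Qed.
Lemma oplus_mono {A : MVAlg} (x y z : A) : y ≤ z -> x ⊕ y ≤ x ⊕ z.
Proof. intro H. rewrite (le_ex _ _ H), oA. apply le_oplus_r. Qed.
Lemma oplus_mono2 {A : MVAlg} (x y z w : A) : x ≤ y -> z ≤ w -> x ⊕ z ≤ y ⊕ w.
Proof.
  intros H1 H2. apply le_trans with (x ⊕ w). apply oplus_mono; auto.
  rewrite (oC x), (oC y). apply oplus_mono; auto.
Qed.
Lemma neg_anti {A : MVAlg} (x y : A) : x ≤ y -> ¬ y ≤ ¬ x.
Proof. unfold mv_le; rewrite nK, oC; auto. Qed.
Lemma neg_anti' {A : MVAlg} (x y : A) : ¬ y ≤ ¬ x -> x ≤ y.
Proof. unfold mv_le; rewrite nK, oC; auto. Qed.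
Lemma le_one_eq {A : MVAlg} (x y : A) : x = mv_one -> x ≤ y -> y = mv_one.
Proof. intros -> H; apply one_le; auto. Qed.

Lemma mulE {A : MVAlg} (x y : A) : x ⊙ y = ¬ (¬ x ⊕ ¬ y). Proof. reflexivity. Qed.
Lemma nmul {A : MVAlg} (x y : A) : ¬ (x ⊙ y) = ¬ x ⊕ ¬ y. Proof. unfold mv_mul; apply nK. Qed.
Lemma noplus {A : MVAlg} (x y : A) : ¬ (x ⊕ y) = ¬ x ⊙ ¬ y. Proof. unfold mv_mul; rewrite !nK; auto. Qed.
Lemma mC {A : MVAlg} (x y : A) : x ⊙ y = y ⊙ x. Proof. unfold mv_mul; rewrite oC; auto. Qed.
Lemma mA {A : MVAlg} (x y z : A) : x ⊙ (y ⊙ z) = x ⊙ y ⊙ z.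
Proof. unfold mv_mul; rewrite !nK, oA; auto. Qed.
Lemma m1 {A : MVAlg} (x : A) : x ⊙ mv_one = x.
Proof. unfold mv_mul; rewrite n1, o0, nK; auto. Qed.
Lemma one_m {A : MVAlg} (x : A) : mv_one ⊙ x = x. Proof. rewrite mC; apply m1. Qed.
Lemma m0 {A : MVAlg} (x : A) : x ⊙ mv_zero = mv_zero.
Proof. unfold mv_mul; rewrite n0, o1; apply n1. Qed.
Lemma mcompl {A : MVAlg} (x : A) : x ⊙ ¬ x = mv_zero.
Proof. unfold mv_mul; rewrite nK, compl; apply n1. Qed.
Lemma mul_mono {A : MVAlg} (x y z : A) : y ≤ z -> x ⊙ y ≤ x ⊙ z.
Proof. intro H. unfold mv_mul. apply neg_anti. apply oplus_mono. apply neg_anti; auto. Qed.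
Lemma mul_mono2 {A : MVAlg} (x y z w : A) : x ≤ y -> z ≤ w -> x ⊙ z ≤ y ⊙ w.
Proof.
  intros H1 H2. apply le_trans with (x ⊙ w). apply mul_mono; auto.
  rewrite (mC x), (mC y). apply mul_mono; auto.
Qed.
Lemma mul_le {A : MVAlg} (x y : A) : x ⊙ y ≤ x.
Proof. unfold mv_mul. apply neg_anti'. rewrite nK. apply le_oplus_r. Qed.
Lemma mul_le' {A : MVAlg} (x y : A) : x ⊙ y ≤ y.
Proof. rewrite mC; apply mul_le. Qed.
Lemma resid {A : MVAlg} (x y z : A) : x ⊙ y ≤ z <-> x ≤ mv_imp y z.
Proof. unfold mv_le, mv_imp. rewrite nmul, oA. tauto. Qed.
Lemma le_zero {A : MVAlg} (x : A) : x ≤ mv_zero -> x = mv_zero.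
Proof. intro H. apply le_antisym; auto. apply le_0. Qed.

Lemma meetE {A : MVAlg} (a b : A) : mv_meet a b = b ⊙ (a ⊕ ¬ b).
Proof. unfold mv_meet, mv_join, mv_mul. rewrite !nK, oC. reflexivity. Qed.
Lemma meet_comm {A : MVAlg} (a b : A) : mv_meet a b = mv_meet b a.
Proof. unfold mv_meet; rewrite join_comm; auto. Qed.
Lemma joinE {A : MVAlg} (a b : A) : mv_join a b = a ⊙ ¬ b ⊕ b.
Proof. unfold mv_join, mv_mul. rewrite nK. reflexivity. Qed.

Lemma Eid {A : MVAlg} (p q : A) : p ⊕ q ⊕ (p ⊙ q) = p ⊕ q.
Proof.
  set (s := p ⊕ q).
  assert (Hs : s = mv_meet q (¬ p) ⊕ p).
  { assert (Hps : p ≤ s) by apply le_oplus_r.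
    pose proof (join_le _ _ Hps) as J. rewrite join_comm, joinE in J.
    rewrite meetE, nK. rewrite <- J at 1. f_equal. unfold s. rewrite mC, oC. reflexivity. }
  assert (Hq : q = mv_meet q (¬ p) ⊕ (p ⊙ q)).
  { assert (Hqp : q ⊙ p ≤ q) by apply mul_le.
    pose proof (join_le _ _ Hqp) as J. rewrite join_comm, joinE in J.
    rewrite <- J at 1. rewrite (mC p q). f_equal.
    rewrite meet_comm, meetE. rewrite nmul, oC. reflexivity. }
  rewrite Hs at 1. rewrite <- oA, (oC p), oA, <- Hq. unfold s. apply oC.
Qed.

Lemma neg_inj {A : MVAlg} (x y : A) : ¬ x = ¬ y -> x = y.
Proof. intro H. rewrite <- (nK x), H. apply nK. Qed.

Lemma Eid' {A : MVAlg} (a b : A) : a ⊙ b ⊙ (a ⊕ b) = a ⊙ b.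
Proof.
  apply neg_inj. rewrite (nmul (a ⊙ b)), nmul, noplus. apply Eid.
Qed.

Lemma perp_sym {A : MVAlg} (a b : A) : b ⊙ ¬ a = b -> a ⊙ ¬ b = a.
Proof.
  intro H.
  assert (H1 : a ⊕ ¬ b = ¬ b).
  { rewrite <- H at 2. rewrite nmul, nK. apply oC. }
  assert (H2 : mv_meet a b = mv_zero).
  { rewrite meetE, H1. apply mcompl. }
  rewrite meet_comm, meetE in H2.
  assert (H3 : a ⊙ (b ⊕ ¬ a) ≤ mv_zero) by (rewrite H2; apply le_refl).
  apply resid in H3. unfold mv_imp in H3. rewrite o0, noplus, nK in H3.
  apply le_antisym. apply mul_le. rewrite mC; auto.
Qed.

Fixpoint pw {A : MVAlg} (z : A) (n : nat) : A :=
  match n with O => mv_one | S k => z ⊙ pw z k end.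

Lemma perp_pw {A : MVAlg} (e u : A) n : e ⊙ u = e -> e ⊙ pw u n = e.
Proof.
  intro H; induction n; simpl. apply m1. rewrite mA, H; auto.
Qed.

Lemma prelin_pw {A : MVAlg} (x y : A) n m :
  pw (mv_imp x y) n ⊕ pw (mv_imp y x) m = mv_one.
Proof.
  set (u := mv_imp x y). set (v := mv_imp y x).
  set (U := pw u n). set (V := pw v m).
  assert (B : ¬ v ⊙ u = ¬ v).
  { unfold u, v, mv_imp. rewrite noplus, nK.
    rewrite (oC (¬x) y). apply Eid'. }
  assert (B1 : ¬ v ⊙ U = ¬ v) by (apply perp_pw; auto).
  assert (B2 : ¬ U ⊙ ¬ ¬ v = ¬ U).
  { apply perp_sym. rewrite nK. auto. }
  rewrite nK in B2.
  assert (B3 : ¬ U ⊙ V = ¬ U) by (apply perp_pw; auto).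
  assert (B4 : ¬ U ⊙ ¬ V = mv_zero).
  { rewrite <- B3 at 1. rewrite <- mA, mcompl. apply m0. }
  rewrite <- noplus in B4. rewrite <- (nK (U ⊕ V)), B4. reflexivity.
Qed.


Lemma join_ge_r {A : MVAlg} (x y : A) : y ≤ mv_join x y.
Proof. unfold mv_join. apply le_oplus_l. Qed.
Lemma join_ge_l {A : MVAlg} (x y : A) : x ≤ mv_join x y.
Proof. rewrite join_comm. apply join_ge_r. Qed.

Lemma imp_trans {A : MVAlg} (x y z : A) : mv_imp x y ⊙ mv_imp y z ≤ mv_imp x z.
Proof.
  apply resid. unfold mv_imp.
  assert (H : ¬ (¬ x ⊕ y) ⊕ (¬ x ⊕ y) ≤ ¬ (¬ x ⊕ y) ⊕ (¬ x ⊕ mv_join y z)).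
  { apply oplus_mono, oplus_mono, join_ge_l. }
  rewrite compl in H. apply one_le in H.
  unfold mv_le. rewrite <- H. unfold mv_join. f_equal. apply oCA.
Qed.

Lemma imp_oplus {A : MVAlg} (a b c : A) : mv_imp a b ≤ mv_imp (a ⊕ c) (b ⊕ c).
Proof.
  unfold mv_le, mv_imp.
  assert (H : a ⊕ ¬ a ≤ mv_join a b ⊕ mv_join (¬ a) c).
  { apply oplus_mono2. apply join_ge_l. apply join_ge_l. }
  rewrite compl' in H. apply one_le in H. rewrite <- H. unfold mv_join.
  rewrite nK. rewrite <- (oA _ b). f_equal. apply oCA.
Qed.

Lemma imp_neg {A : MVAlg} (x y : A) : mv_imp x y = mv_imp (¬ y) (¬ x).
Proof. unfold mv_imp. rewrite nK. apply oC. Qed.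
Lemma imp_refl {A : MVAlg} (x : A) : mv_imp x x = mv_one. Proof. apply compl. Qed.
Lemma imp_1 {A : MVAlg} (x : A) : mv_imp x mv_one = mv_one. Proof. apply o1. Qed.
Lemma one_imp {A : MVAlg} (x : A) : mv_imp mv_one x = x. Proof. unfold mv_imp; rewrite n1; apply zo. Qed.
Lemma zero_imp {A : MVAlg} (x : A) : mv_imp mv_zero x = mv_one. Proof. unfold mv_imp; rewrite n0; apply one_o. Qed.
Lemma imp_zero {A : MVAlg} (x : A) : mv_imp x mv_zero = ¬ x. Proof. unfold mv_imp; apply o0. Qed.

Lemma pw_add {A : MVAlg} (z : A) n m : pw z (n + m) = pw z n ⊙ pw z m.
Proof. induction n; simpl. rewrite one_m; auto. rewrite IHn, mA; auto. Qed.
Lemma pw_anti {A : MVAlg} (z : A) n m : (n <= m)%nat -> pw z m ≤ pw z n.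
Proof.
  intro H. replace m with (n + (m - n))%nat by lia. rewrite pw_add. apply mul_le.
Qed.

Lemma filter_up {A : MVAlg} (F : A -> Prop) x y : is_filter A F -> F x -> x ≤ y -> F y.
Proof. intros [_ [_ H]]; eauto. Qed.
Lemma filter_mul {A : MVAlg} (F : A -> Prop) x y : is_filter A F -> F x -> F y -> F (x ⊙ y).
Proof. intros [_ [H _]]; eauto. Qed.
Lemma filter_one {A : MVAlg} (F : A -> Prop) : is_filter A F -> F mv_one.
Proof. intros [H _]; eauto. Qed.
Lemma filter_eq1 {A : MVAlg} (F : A -> Prop) x : is_filter A F -> x = mv_one -> F x.
Proof. intros HF ->; apply filter_one; auto. Qed.
Lemma filter_trans {A : MVAlg} (F : A -> Prop) x y z : is_filter A F ->
  F (mv_imp x y) -> F (mv_imp y z) -> F (mv_imp x z).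
Proof.
  intros HF H1 H2. apply filter_up with (mv_imp x y ⊙ mv_imp y z); auto.
  apply filter_mul; auto. apply imp_trans.
Qed.
Lemma filter_mp {A : MVAlg} (F : A -> Prop) x y : is_filter A F -> F x -> F (mv_imp x y) -> F y.
Proof.
  intros HF H1 H2. apply filter_up with (x ⊙ mv_imp x y); auto.
  apply filter_mul; auto. rewrite mC. apply resid. apply le_refl.
Qed.

Lemma max_F1 {A : MVAlg} (F : A -> Prop) z : maximal_filter A F -> ~ F z ->
  exists n, F (¬ pw z n).
Proof.
  intros [[HF Hp] Hmax] Hz.
  set (K := fun w => exists f n, F f /\ f ⊙ pw z n ≤ w).
  assert (HK : is_filter A K).
  { split; [|split].
    - exists mv_one, O. split. apply filter_one; auto. simpl. rewrite m1. apply le_refl.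
    - intros x y [f [n [Hf Hx]]] [g [m [Hg Hy]]]. exists (f ⊙ g), (n + m)%nat. split.
      apply filter_mul; auto.
      apply le_trans with ((f ⊙ pw z n) ⊙ (g ⊙ pw z m)); [|apply mul_mono2; auto].
      rewrite pw_add. rewrite <- !mA. rewrite (mA (pw z n)), (mC (pw z n) g), <- mA. apply le_refl.
    - intros x y [f [n [Hf Hx]]] Hxy. exists f, n; split; auto. eapply le_trans; eauto. }
  destruct (classic (K mv_zero)) as [[f [n [Hf H0]]]|H0].
  - exists n. apply filter_up with f; auto. apply resid in H0. unfold mv_imp in H0. rewrite o0 in H0. auto.
  - exfalso. apply Hz. apply (Hmax K). split; auto.
    intros x Fx. exists x, O. split; auto. simpl. rewrite m1. apply le_refl.
    exists mv_one, 1%nat. split. apply filter_one; auto. simpl. rewrite m1, one_m. apply le_refl.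
Qed.

Lemma max_total {A : MVAlg} (F : A -> Prop) x y : maximal_filter A F ->
  F (mv_imp x y) \/ F (mv_imp y x).
Proof.
  intros HM. destruct (classic (F (mv_imp x y))) as [H|H]; auto.
  destruct (classic (F (mv_imp y x))) as [H'|H']; auto.
  exfalso. destruct (max_F1 F _ HM H) as [n Hn]. destruct (max_F1 F _ HM H') as [m Hm].
  destruct HM as [[HF Hp] _]. apply Hp.
  assert (Hn' : F (¬ pw (mv_imp x y) (n + m))).
  { apply filter_up with (¬ pw (mv_imp x y) n); auto. apply neg_anti, pw_anti; lia. }
  assert (Hm' : F (¬ pw (mv_imp y x) (n + m))).
  { apply filter_up with (¬ pw (mv_imp y x) m); auto. apply neg_anti, pw_anti; lia. }
  pose proof (filter_mul F _ _ HF Hn' Hm') as HH.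
  rewrite <- noplus, prelin_pw, n1 in HH. auto.
Qed.

Section Const.
End Const.

Lemma c_eq {A : MVAlg} (c : Q -> A) r r' : is_pavelka A c -> inQ01 r -> inQ01 r' -> (r == r')%Q -> c r = c r'.
Proof.
  intros [H0 [Hadd _]] Hr Hr' E.
  rewrite <- (o0 (c r)), <- H0. apply Hadd; auto. unfold inQ01; qlra.
  rewrite Q.min_l; unfold inQ01 in *; qlra.
Qed.
Lemma c_1 {A : MVAlg} (c : Q -> A) : is_pavelka A c -> c 1%Q = mv_one.
Proof.
  intros HP. destruct HP as [H0 [_ Hneg]]. rewrite <- (Hneg 0%Q 1%Q); unfold inQ01; try qlra.
  rewrite H0; reflexivity.
Qed.
Lemma c_neg {A : MVAlg} (c : Q -> A) r : is_pavelka A c -> inQ01 r -> ¬ c r = c (1 - r)%Q.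
Proof. intros [_ [_ Hneg]] Hr. apply Hneg; unfold inQ01 in *; qlra. Qed.
Lemma c_add {A : MVAlg} (c : Q -> A) r s : is_pavelka A c -> inQ01 r -> inQ01 s -> (r + s <= 1)%Q ->
  c r ⊕ c s = c (r + s)%Q.
Proof.
  intros [_ [Hadd _]] Hr Hs H. apply Hadd; unfold inQ01 in *; try qlra.
  rewrite Q.min_l; qlra.
Qed.
Lemma c_add1 {A : MVAlg} (c : Q -> A) r s : is_pavelka A c -> inQ01 r -> inQ01 s -> (1 <= r + s)%Q ->
  c r ⊕ c s = mv_one.
Proof.
  intros HP Hr Hs H. rewrite <- (c_1 c HP). destruct HP as [_ [Hadd _]].
  apply Hadd; unfold inQ01 in *; try qlra. rewrite Q.min_r; qlra.
Qed.
Lemma c_imp_le {A : MVAlg} (c : Q -> A) r s : is_pavelka A c -> inQ01 r -> inQ01 s -> (r <= s)%Q ->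
  mv_imp (c r) (c s) = mv_one.
Proof.
  intros HP Hr Hs H. unfold mv_imp. rewrite c_neg; auto. apply c_add1; unfold inQ01 in *; auto; qlra.
Qed.
Lemma c_imp_gt {A : MVAlg} (c : Q -> A) r s : is_pavelka A c -> inQ01 r -> inQ01 s -> (s < r)%Q ->
  mv_imp (c r) (c s) = c (1 - r + s)%Q.
Proof.
  intros HP Hr Hs H. unfold mv_imp. rewrite c_neg; auto. apply c_add; unfold inQ01 in *; auto; qlra.
Qed.
Lemma c_mul1 {A : MVAlg} (c : Q -> A) r s : is_pavelka A c -> inQ01 r -> inQ01 s -> (1 <= r + s)%Q ->
  c r ⊙ c s = c (r + s - 1)%Q.
Proof.
  intros HP Hr Hs H. unfold mv_mul. rewrite !c_neg; auto. rewrite c_add; auto; unfold inQ01 in *; try qlra.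
  rewrite c_neg; auto; unfold inQ01; try qlra. apply c_eq; auto; unfold inQ01 in *; try qlra.
Qed.
Lemma c_mul0 {A : MVAlg} (c : Q -> A) r s : is_pavelka A c -> inQ01 r -> inQ01 s -> (r + s <= 1)%Q ->
  c r ⊙ c s = mv_zero.
Proof.
  intros HP Hr Hs H. unfold mv_mul. rewrite !c_neg; auto. rewrite c_add1; auto; unfold inQ01 in *; try qlra.
  apply n1.
Qed.

Lemma c_notin {A : MVAlg} (c : Q -> A) (F : A -> Prop) q : is_pavelka A c -> proper_filter A F ->
  inQ01 q -> (q < 1)%Q -> ~ F (c q).
Proof.
  intros HP [HF Hp] Hq Hq1 Fq.
  set (e := (1 - q)%Q).
  assert (Hk : forall k : nat, F mv_zero \/ ((inject_Z (Z.of_nat k) * e <= 1)%Q /\ F (c (1 - inject_Z (Z.of_nat k) * e)%Q))).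
  { induction k.
    - right. change (inject_Z (Z.of_nat 0)) with 0%Q. split. unfold e; qlra. rewrite (c_eq c _ 1%Q); auto. apply filter_eq1; auto. rewrite c_1; auto.
      unfold inQ01, e in *; qlra. unfold inQ01; qlra. unfold e; qlra.
    - destruct IHk as [H|[Hle Hk]]; auto.
      rewrite Nat2Z.inj_succ, <- Z.add_1_r, inject_Z_plus.
      change (inject_Z 1) with 1%Q.
      assert (HK0 : (0 <= inject_Z (Z.of_nat k))%Q) by (unfold Qle; simpl; lia).
      assert (He0 : (0 < e)%Q) by (unfold e; qlra).
      assert (Hke : (0 <= inject_Z (Z.of_nat k) * e)%Q) by (apply Qmult_le_0_compat; qlra).
      destruct (Qlt_le_dec 1 ((inject_Z (Z.of_nat k) + 1) * e)) as [Hlt|Hge].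
      + left. rewrite <- (c_mul0 c (1 - inject_Z (Z.of_nat k) * e) q); auto.
        apply filter_mul; auto.
        unfold inQ01, e in *; simpl in *; qlra.
        unfold e in *; simpl in *; qlra.
      + right. split; auto.
        rewrite (c_eq c _ ((1 - inject_Z (Z.of_nat k) * e) + q - 1)%Q); auto.
        rewrite <- c_mul1; auto. apply filter_mul; auto.
        all: try (unfold inQ01, e in *; qlra). }
  destruct (Qarchimedean (/ e)) as [p Hpe].
  destruct (Hk (Pos.to_nat p)) as [H|[Hle _]]; auto.
  rewrite positive_nat_Z in Hle.
  assert (He : (0 < e)%Q) by (unfold e; qlra).
  assert (Hpe' : (1 < inject_Z (Z.pos p) * e)%Q).
  { apply (proj2 (Qmult_lt_r _ _ e He)) in Hpe.
    rewrite Qmult_comm, Qmult_inv_r in Hpe. exact Hpe. intro E; rewrite E in He; discriminate. }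
  qlra.
Qed.


Lemma Q2R0 : Q2R 0 = 0%R. Proof. unfold Q2R; simpl; field. Qed.
Lemma Q2R1 : Q2R 1 = 1%R. Proof. unfold Q2R; simpl; field. Qed.

Lemma Qdense (a b : R) : (a < b)%R -> exists q : Q, (a < Q2R q < b)%R.
Proof.
  intro H.
  destruct (archimed (/ (b - a))) as [Hn _].
  set (n := up (/ (b - a))) in *.
  assert (Hpos : (0 < / (b - a))%R) by (apply Rinv_0_lt_compat; rlra).
  assert (Hn0 : (0 < IZR n)%R) by rlra.
  assert (Hn0' : (0 < n)%Z) by (apply lt_IZR; auto).
  destruct (archimed (a * IZR n)) as [Hm1 Hm2].
  set (m := up (a * IZR n)) in *.
  destruct n as [|p|p]; try lia.
  exists (Qmake m p). unfold Q2R; simpl.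
  assert (E1 : (a * IZR (Z.pos p) < IZR m)%R) by auto.
  assert (E2 : (IZR m <= a * IZR (Z.pos p) + 1)%R) by rlra.
  assert (E3 : (1 < (b - a) * IZR (Z.pos p))%R).
  { apply Rmult_lt_compat_l with (r := (b - a)%R) in Hn. rewrite Rinv_r in Hn. rlra. rlra. rlra. }
  split.
  - apply Rmult_lt_reg_r with (IZR (Z.pos p)); auto. rewrite Rmult_assoc, Rinv_l. rlra. rlra.
  - apply Rmult_lt_reg_r with (IZR (Z.pos p)); auto. rewrite Rmult_assoc, Rinv_l. rlra. rlra.
Qed.

Lemma inQ01_R (q : Q) : (0 <= Q2R q <= 1)%R -> inQ01 q.
Proof.
  intros [H1 H2]. split.
  apply Rle_Qle. rewrite Q2R0; auto. apply Rle_Qle. rewrite Q2R1; auto.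
Qed.
Lemma inQ01_R' (q : Q) : inQ01 q -> (0 <= Q2R q <= 1)%R.
Proof.
  intros [H1 H2]. split. rewrite <- Q2R0. apply Qle_Rle; auto.
  rewrite <- Q2R1. apply Qle_Rle; auto.
Qed.

Lemma Qdense01 (a b : R) : (0 <= a)%R -> (a < b)%R -> (b <= 1)%R -> exists q : Q, inQ01 q /\ (a < Q2R q < b)%R.
Proof.
  intros H0 H H1. destruct (Qdense a b H) as [q Hq]. exists q. split; auto.
  apply inQ01_R. rlra.
Qed.

Lemma eq_by_Q (a b : R) : (0 <= a <= 1)%R -> (0 <= b <= 1)%R ->
  (forall r, inQ01 r -> (Q2R r < a)%R -> (Q2R r <= b)%R) ->
  (forall r, inQ01 r -> (a < Q2R r)%R -> (b <= Q2R r)%R) -> a = b.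
Proof.
  intros Ha Hb H1 H2.
  destruct (Rtotal_order a b) as [Hab|[Hab|Hab]]; auto.
  - destruct (Qdense01 a b) as [q [Hq1 Hq2]]; try rlra.
    specialize (H2 q Hq1 (proj1 Hq2)). rlra.
  - destruct (Qdense01 b a) as [q [Hq1 Hq2]]; try rlra.
    specialize (H1 q Hq1 (proj2 Hq2)). rlra.
Qed.

Lemma low_choice (a d : R) : (0 <= a <= 1)%R -> (0 < d)%R ->
  exists s, inQ01 s /\ (a - d < Q2R s)%R /\ (s = 0%Q \/ (Q2R s < a)%R).
Proof.
  intros Ha Hd. destruct (Rlt_le_dec (a - d) 0) as [H|H].
  - exists 0%Q. split. unfold inQ01; qlra. rewrite Q2R0. auto.
  - destruct (Qdense01 (a - d) a) as [q [Hq1 Hq2]]; try rlra.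
    exists q; split; auto. split. rlra. right; rlra.
Qed.

Definition Sset {A : MVAlg} (c : Q -> A) (F : A -> Prop) (x : A) : R -> Prop :=
  fun v => v = 0%R \/ exists r, inQ01 r /\ F (mv_imp (c r) x) /\ v = Q2R r.

Lemma Sset_bound {A : MVAlg} (c : Q -> A) F x : bound (Sset c F x).
Proof.
  exists 1%R. intros v [->|[r [Hr [_ ->]]]]. rlra. apply inQ01_R'; auto.
Qed.
Lemma Sset_ne {A : MVAlg} (c : Q -> A) F x : exists v, Sset c F x v.
Proof. exists 0%R; left; auto. Qed.

Definition hval {A : MVAlg} (c : Q -> A) (F : A -> Prop) (x : A) : R :=
  proj1_sig (completeness _ (Sset_bound c F x) (Sset_ne c F x)).

Lemma hval_lub {A : MVAlg} (c : Q -> A) F x : is_lub (Sset c F x) (hval c F x).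
Proof. unfold hval. destruct (completeness _ _ _) as [m Hm]. simpl. auto. Qed.

Section HV.
End HV.

Lemma hv_range {A : MVAlg} (c : Q -> A) F x : (0 <= hval c F x <= 1)%R.
Proof.
  destruct (hval_lub c F x) as [H1 H2]. split.
  - apply H1. left; auto.
  - apply H2. intros v [->|[r [Hr [_ ->]]]]. rlra. apply inQ01_R'; auto.
Qed.

Lemma hv_L1 {A : MVAlg} (c : Q -> A) F x r : inQ01 r -> F (mv_imp (c r) x) -> (Q2R r <= hval c F x)%R.
Proof. intros Hr HF. destruct (hval_lub c F x) as [H1 H2]. apply H1. right. exists r; auto. Qed.

Lemma const_le {A : MVAlg} (c : Q -> A) (F : A -> Prop) r s : is_pavelka A c -> proper_filter A F ->
  inQ01 r -> inQ01 s -> F (mv_imp (c r) (c s)) -> (r <= s)%Q.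
Proof.
  intros HP HF Hr Hs H. destruct (Qlt_le_dec s r) as [Hlt|Hle]; auto.
  exfalso. rewrite c_imp_gt in H; auto. apply (c_notin c F (1 - r + s)); auto.
  unfold inQ01 in *; qlra. qlra.
Qed.

Lemma hv_L2 {A : MVAlg} (c : Q -> A) F x s : is_pavelka A c -> proper_filter A F ->
  inQ01 s -> F (mv_imp x (c s)) -> (hval c F x <= Q2R s)%R.
Proof.
  intros HP HF Hs H. destruct (hval_lub c F x) as [H1 H2]. apply H2.
  intros v [->|[r [Hr [Hrx ->]]]]. apply inQ01_R'; auto.
  apply Qle_Rle. apply (const_le c F); auto. apply filter_trans with x; auto. apply HF.
Qed.

Lemma hv_L3 {A : MVAlg} (c : Q -> A) F x r : is_pavelka A c -> maximal_filter A F ->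
  inQ01 r -> (Q2R r < hval c F x)%R -> F (mv_imp (c r) x).
Proof.
  intros HP HM Hr H. destruct (max_total F (c r) x HM) as [H'|H']; auto.
  exfalso. assert (hval c F x <= Q2R r)%R by (apply hv_L2; auto; apply HM). rlra.
Qed.

Lemma hv_L4 {A : MVAlg} (c : Q -> A) F x s : is_pavelka A c -> maximal_filter A F ->
  inQ01 s -> (hval c F x < Q2R s)%R -> F (mv_imp x (c s)).
Proof.
  intros HP HM Hs H. destruct (max_total F x (c s) HM) as [H'|H']; auto.
  exfalso. assert (Q2R s <= hval c F x)%R by (apply hv_L1; auto). rlra.
Qed.


Lemma Q2R_1m (r : Q) : Q2R (1 - r) = (1 - Q2R r)%R.
Proof. rewrite Q2R_minus, Q2R1; auto. Qed.

Lemma inQ01_1m r : inQ01 r -> inQ01 (1 - r)%Q.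
Proof. unfold inQ01; intros; qlra. Qed.

Lemma hv_neg {A : MVAlg} (c : Q -> A) F x : is_pavelka A c -> maximal_filter A F ->
  hval c F (¬ x) = (1 - hval c F x)%R.
Proof.
  intros HP HM. pose proof (hv_range c F x). pose proof (hv_range c F (¬ x)).
  apply eq_by_Q; try rlra.
  - intros r Hr H1. pose proof (hv_L3 c F _ r HP HM Hr H1) as H2.
    rewrite imp_neg, nK, c_neg in H2; auto.
    pose proof (hv_L2 c F _ _ HP (proj1 HM) (inQ01_1m _ Hr) H2) as H3. rewrite Q2R_1m in H3. rlra.
  - intros r Hr H1. pose proof (hv_L4 c F _ r HP HM Hr H1) as H2.
    rewrite imp_neg, nK, c_neg in H2; auto.
    pose proof (hv_L1 c F _ _ (inQ01_1m _ Hr) H2) as H3. rewrite Q2R_1m in H3. rlra.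
Qed.

Lemma filter_imp_oplus {A : MVAlg} (F : A -> Prop) a b c' d : is_filter A F ->
  F (mv_imp a b) -> F (mv_imp c' d) -> F (mv_imp (a ⊕ c') (b ⊕ d)).
Proof.
  intros HF H1 H2. apply filter_trans with (b ⊕ c'); auto.
  apply filter_up with (mv_imp a b); auto. apply imp_oplus.
  rewrite (oC b c'), (oC b d). apply filter_up with (mv_imp c' d); auto. apply imp_oplus.
Qed.

Lemma hv_oplus {A : MVAlg} (c : Q -> A) F x y : is_pavelka A c -> maximal_filter A F ->
  hval c F (x ⊕ y) = Rmin (hval c F x + hval c F y) 1.
Proof.
  intros HP HM. pose proof (hv_range c F x) as Rx. pose proof (hv_range c F y) as Ry.
  pose proof (hv_range c F (x ⊕ y)) as Rxy.
  assert (HF : is_filter A F) by apply HM.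
  assert (Hmin : (0 <= Rmin (hval c F x + hval c F y) 1 <= 1)%R).
  { unfold Rmin; destruct Rle_dec; rlra. }
  apply eq_by_Q; auto.
  - intros r Hr H1. apply inQ01_R' in Hr.
    destruct (Rle_lt_dec (Q2R r) (hval c F x + hval c F y)) as [Hle|Hlt].
    { unfold Rmin; destruct Rle_dec; rlra. }
    exfalso. set (d := ((Q2R r - hval c F x - hval c F y) / 2)%R).
    destruct (Qdense01 (hval c F x) (hval c F x + d)) as [s [Hs1 Hs2]]; try (unfold d; rlra).
    destruct (Qdense01 (hval c F y) (hval c F y + d)) as [t [Ht1 Ht2]]; try (unfold d; rlra).
    assert (Fx : F (mv_imp x (c s))) by (apply (hv_L4 c F); auto; rlra).
    assert (Fy : F (mv_imp y (c t))) by (apply (hv_L4 c F); auto; rlra).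
    pose proof (filter_imp_oplus F _ _ _ _ HF Fx Fy) as Fxy.
    assert (Hst : (s + t <= 1)%Q).
    { apply Rle_Qle. rewrite Q2R_plus, Q2R1. unfold d in *; rlra. }
    rewrite c_add in Fxy; auto.
    assert (Hst' : inQ01 (s + t)) by (unfold inQ01 in *; qlra).
    pose proof (hv_L2 c F _ _ HP (proj1 HM) Hst' Fxy) as H3. rewrite Q2R_plus in H3. unfold d in *; rlra.
  - intros r Hr H1. apply inQ01_R' in Hr.
    destruct (Rle_lt_dec (Rmin (hval c F x + hval c F y) 1) (Q2R r)) as [Hle|Hlt]; auto.
    exfalso. assert (Hr1 : (Q2R r < 1)%R) by (unfold Rmin in Hlt; destruct Rle_dec; rlra).
    assert (Hr2 : (Q2R r < hval c F x + hval c F y)%R) by (unfold Rmin in Hlt; destruct Rle_dec; rlra).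
    set (d := ((hval c F x + hval c F y - Q2R r) / 2)%R).
    destruct (low_choice (hval c F x) d) as [s [Hs1 [Hs2 Hs3]]]; auto. unfold d; rlra.
    destruct (low_choice (hval c F y) d) as [t [Ht1 [Ht2 Ht3]]]; auto. unfold d; rlra.
    assert (Fx : F (mv_imp (c s) x)).
    { destruct Hs3 as [->|Hs3]. destruct HP as [H0 _]. rewrite H0, zero_imp. apply filter_one; auto.
      apply (hv_L3 c F); auto. }
    assert (Fy : F (mv_imp (c t) y)).
    { destruct Ht3 as [->|Ht3]. destruct HP as [H0 _]. rewrite H0, zero_imp. apply filter_one; auto.
      apply (hv_L3 c F); auto. }
    pose proof (filter_imp_oplus F _ _ _ _ HF Fx Fy) as Fxy.
    destruct (Qlt_le_dec 1 (s + t)) as [Hst|Hst].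
    + rewrite c_add1 in Fxy; auto. 2: qlra. rewrite <- (c_1 c HP) in Fxy.
      assert (Q1 : inQ01 1) by (unfold inQ01; qlra).
      pose proof (hv_L1 c F _ _ Q1 Fxy) as H3. rewrite Q2R1 in H3. rlra.
    + rewrite c_add in Fxy; auto.
      assert (Hst' : inQ01 (s + t)) by (unfold inQ01 in *; qlra).
      pose proof (hv_L1 c F _ _ Hst' Fxy) as H3. rewrite Q2R_plus in H3. unfold d in *; rlra.
Qed.

Lemma hv_zero {A : MVAlg} (c : Q -> A) F : is_pavelka A c -> maximal_filter A F ->
  hval c F mv_zero = 0%R.
Proof.
  intros HP HM. pose proof (hv_range c F mv_zero).
  assert (hval c F mv_zero <= Q2R 0)%R.
  { apply (hv_L2 c F); auto. apply HM. unfold inQ01; qlra. rewrite zero_imp. apply filter_one; apply HM. }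
  rewrite Q2R0 in H0. rlra.
Qed.

Lemma hv_mul {A : MVAlg} (c : Q -> A) F x y : is_pavelka A c -> maximal_filter A F ->
  hval c F (x ⊙ y) = (1 - Rmin ((1 - hval c F x) + (1 - hval c F y)) 1)%R.
Proof.
  intros HP HM. unfold mv_mul. rewrite hv_neg, hv_oplus, !hv_neg; auto.
Qed.

Lemma hv_F1 {A : MVAlg} (c : Q -> A) F w : is_pavelka A c -> F w -> hval c F w = 1%R.
Proof.
  intros HP Hw. apply Rle_antisym. apply hv_range. rewrite <- Q2R1. apply (hv_L1 c F). unfold inQ01; qlra.
  rewrite c_1, one_imp; auto.
Qed.

Lemma hv_one_iff {A : MVAlg} (c : Q -> A) F w : is_pavelka A c -> maximal_filter A F ->
  (hval c F w = 1%R <-> F w).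
Proof.
  intros HP HM. split; [|apply hv_F1; auto].
  intro H1. destruct (classic (F w)) as [Hw|Hw]; auto. exfalso.
  destruct (max_F1 F w HM Hw) as [n Hn].
  assert (Hp : forall k, hval c F (pw w k) = 1%R).
  { clear Hn. induction k; simpl.
    - apply hv_F1; auto. apply filter_one; apply HM.
    - rewrite hv_mul, H1, IHk; auto. unfold Rmin; destruct Rle_dec; rlra. }
  pose proof (hv_F1 c F _ HP Hn) as H2. rewrite hv_neg, Hp in H2; auto. rlra.
Qed.

Lemma hv_imp {A : MVAlg} (c : Q -> A) F x y : is_pavelka A c -> maximal_filter A F ->
  hval c F (mv_imp x y) = Rmin 1 (1 - hval c F x + hval c F y).
Proof.
  intros HP HM. unfold mv_imp. rewrite hv_oplus, hv_neg; auto.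
  pose proof (hv_range c F x). pose proof (hv_range c F y).
  unfold Rmin; repeat destruct Rle_dec; rlra.
Qed.

Lemma hv_qe {A : MVAlg} (c : Q -> A) F : is_pavelka A c -> maximal_filter A F ->
  quotient_embedding A F (hval c F).
Proof.
  intros HP HM. split; [|split; [|split; [|split]]].
  - intro; apply hv_range.
  - intros; apply hv_oplus; auto.
  - intros; apply hv_neg; auto.
  - apply hv_zero; auto.
  - intros x y. unfold filter_cong. rewrite <- !(hv_one_iff c F _ HP HM), !hv_imp; auto.
    pose proof (hv_range c F x). pose proof (hv_range c F y).
    split. intros E; rewrite E. unfold Rmin; repeat destruct Rle_dec; split; rlra.
    intros [E1 E2]. unfold Rmin in *; repeat destruct Rle_dec; rlra.
Qed.


Definition ishom (A : MVAlg) (h : A -> R) : Prop :=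
  (forall x, 0 <= h x <= 1)%R /\
  (forall x y, h (x ⊕ y) = Rmin (h x + h y) 1) /\
  (forall x, h (¬ x) = 1 - h x)%R /\ h mv_zero = 0%R.

Lemma qe_hom {A : MVAlg} F h : quotient_embedding A F h -> ishom A h.
Proof. intros [H1 [H2 [H3 [H4 _]]]]. split; auto. Qed.


Lemma hom_rng {A : MVAlg} h (x : A) : ishom A h -> (0 <= h x <= 1)%R.
Proof. intros [H _]; auto. Qed.
Lemma hom_oplus {A : MVAlg} h (x y : A) : ishom A h -> h (x ⊕ y) = Rmin (h x + h y) 1.
Proof. intros [_ [H _]]; auto. Qed.
Lemma hom_neg {A : MVAlg} h (x : A) : ishom A h -> h (¬ x) = (1 - h x)%R.
Proof. intros [_ [_ [H _]]]; auto. Qed.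
Lemma hom_zero {A : MVAlg} h : ishom A h -> h mv_zero = 0%R.
Proof. intros [_ [_ [_ H]]]; auto. Qed.
Lemma hom_one {A : MVAlg} h : ishom A h -> h mv_one = 1%R.
Proof. intros Hh. unfold mv_one. rewrite hom_neg, hom_zero; auto; rlra. Qed.
Lemma hom_mul {A : MVAlg} h (x y : A) : ishom A h -> h (x ⊙ y) = Rmax 0 (h x + h y - 1).
Proof.
  intros Hh. unfold mv_mul. rewrite hom_neg, hom_oplus, !hom_neg; auto.
  pose proof (hom_rng h x Hh). pose proof (hom_rng h y Hh). rmm.
Qed.
Lemma hom_imp {A : MVAlg} h (x y : A) : ishom A h -> h (mv_imp x y) = Rmin 1 (1 - h x + h y).
Proof.
  intros Hh. unfold mv_imp. rewrite hom_oplus, hom_neg; auto.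
  pose proof (hom_rng h x Hh). pose proof (hom_rng h y Hh). rmm.
Qed.
Lemma hom_join {A : MVAlg} h (x y : A) : ishom A h -> h (mv_join x y) = Rmax (h x) (h y).
Proof.
  intros Hh. unfold mv_join. rewrite hom_oplus, hom_neg, hom_oplus, hom_neg; auto.
  pose proof (hom_rng h x Hh). pose proof (hom_rng h y Hh). rmm.
Qed.
Lemma hom_meet {A : MVAlg} h (x y : A) : ishom A h -> h (mv_meet x y) = Rmin (h x) (h y).
Proof.
  intros Hh. unfold mv_meet. rewrite hom_neg, hom_join, !hom_neg; auto.
  pose proof (hom_rng h x Hh). pose proof (hom_rng h y Hh). rmm.
Qed.
Lemma hom_le {A : MVAlg} h (x y : A) : ishom A h -> x ≤ y -> (h x <= h y)%R.
Proof.
  intros Hh H. unfold mv_le in H. assert (E : h (¬ x ⊕ y) = h mv_one) by (rewrite H; auto).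
  rewrite hom_oplus, hom_neg, hom_one in E; auto.
  pose proof (hom_rng h x Hh). pose proof (hom_rng h y Hh). rmm.
Qed.
Lemma hom_pw {A : MVAlg} h (x : A) n : ishom A h -> h (pw x n) = Rmax 0 (1 - INR n * (1 - h x)).
Proof.
  intros Hh. pose proof (hom_rng h x Hh). induction n; simpl pw.
  - rewrite hom_one; auto. simpl. rmm.
  - rewrite hom_mul, IHn; auto. rewrite S_INR.
    assert (0 <= INR n)%R by apply pos_INR.
    assert (0 <= INR n * (1 - h x))%R by (apply Rmult_le_pos; rlra).
    unfold Rmax; repeat destruct Rle_dec; try rlra.
Qed.

Lemma hom_c {A : MVAlg} (c : Q -> A) h r : is_pavelka A c -> ishom A h -> inQ01 r -> h (c r) = Q2R r.
Proof.
  intros HP Hh Hr.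
  destruct r as [a b]. set (e := (1 # b)%Q).
  assert (He : inQ01 e) by (unfold inQ01, e, Qle; simpl; lia).
  set (u := h (c e)).
  assert (Hu : (0 <= u <= 1)%R) by (apply hom_rng; auto).
  assert (Claim1 : forall k : nat, (Z.of_nat k <= Z.pos b)%Z ->
     h (c (inject_Z (Z.of_nat k) * e)%Q) = Rmin (INR k * u) 1).
  { induction k; intros Hk.
    - rewrite (c_eq c _ 0%Q); auto. destruct HP as [H0 _]. rewrite H0, hom_zero; auto. simpl. rmm.
      unfold inQ01, e, Qle, Qmult; simpl; lia. unfold inQ01; qlra. unfold Qeq; simpl; lia.
    - assert (E1 : inQ01 (inject_Z (Z.of_nat k) * e)) by (unfold inQ01, e, Qle, Qmult; simpl; lia).
      rewrite (c_eq c _ (inject_Z (Z.of_nat k) * e + e)%Q); auto.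
      rewrite <- c_add; auto. rewrite hom_oplus, IHk; auto. rewrite S_INR.
      assert (0 <= INR k * u)%R by (apply Rmult_le_pos; auto using pos_INR; rlra). rewrite Rmult_plus_distr_r, Rmult_1_l. fold u. rmm. lia.
      all: unfold inQ01, e, Qeq, Qle, Qmult, Qplus; simpl; try nia. }
  set (B := INR (Pos.to_nat b)).
  assert (HB : B = IZR (Z.pos b)) by (unfold B; rewrite INR_IZR_INZ, positive_nat_Z; auto).
  assert (HB1 : (1 <= B)%R) by (rewrite HB; apply IZR_le; lia).
  assert (C2 : (1 <= B * u)%R).
  { pose proof (Claim1 (Pos.to_nat b) ltac:(rewrite positive_nat_Z; lia)) as C. rewrite positive_nat_Z in C.
    rewrite (c_eq c _ 1%Q), c_1, hom_one in C; auto. fold B in C. rmm.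
    unfold inQ01, e, Qle, Qmult; simpl; nia. unfold inQ01; qlra.
    unfold e, Qeq, Qmult; simpl; nia. }
  assert (C3 : (Rmin ((B - 1) * u) 1 = 1 - u)%R).
  { pose proof (Claim1 (Pos.to_nat b - 1)%nat ltac:(lia)) as C.
    assert (Ek : c (inject_Z (Z.of_nat (Pos.to_nat b - 1)) * e)%Q = ¬ c e).
    { rewrite c_neg; auto.
      assert (Ez : Z.of_nat (Pos.to_nat b - 1) = (Z.pos b - 1)%Z) by lia. rewrite Ez.
      assert (Pe : (inject_Z (Z.pos b) * e == 1)%Q) by (unfold e, Qeq; simpl; lia).
      assert (P1 : (1 <= inject_Z (Z.pos b))%Q) by (unfold Qle; simpl; lia).
      assert (Ez2 : (inject_Z (Z.pos b - 1) == inject_Z (Z.pos b) - 1)%Q)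
        by (unfold Qeq, Qminus, Qplus, Qopp, inject_Z; cbn [Qnum Qden]; lia).
      destruct He as [He1 He2].
      assert (Pe0 : (0 <= (inject_Z (Z.pos b) - 1) * e)%Q) by (apply Qmult_le_0_compat; qlra).
      apply c_eq; auto; unfold inQ01; rewrite ?Ez2; qlra. }
    rewrite Ek, hom_neg in C; auto. rewrite (minus_INR (Pos.to_nat b) 1) in C by lia. fold u B in C. simpl INR in C. rewrite <- C. reflexivity. }
  assert (Hu' : (B * u = 1)%R).
  { replace ((B - 1) * u)%R with (B * u - u)%R in C3 by ring.
    unfold Rmin in C3; destruct Rle_dec; try rlra.
    assert (u = 0%R) by rlra. rewrite H, Rmult_0_r in *. rlra. }
  assert (Ha : (0 <= a <= Z.pos b)%Z).
  { destruct Hr as [H1 H2]. unfold Qle in *; simpl in *; lia. }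
  pose proof (Claim1 (Z.to_nat a) ltac:(rewrite Z2Nat.id; lia)) as C. rewrite Z2Nat.id in C by lia.
  rewrite (c_eq c _ (inject_Z a * e)%Q); auto. rewrite C.
  rewrite INR_IZR_INZ, Z2Nat.id by lia.
  unfold Q2R; simpl.
  assert (Hu2 : u = (/ IZR (Z.pos b))%R).
  { rewrite <- HB. apply Rmult_eq_reg_l with B. rewrite Hu', Rinv_r; auto. rlra. rlra. }
  rewrite Hu2. assert (IZR a <= IZR (Z.pos b))%R by (apply IZR_le; lia).
  assert (0 < IZR (Z.pos b))%R by (apply IZR_lt; lia).
  unfold Rmin; destruct Rle_dec; auto. exfalso. apply n.
  apply Rmult_le_reg_r with (IZR (Z.pos b)); auto. rewrite Rmult_assoc, Rinv_l; rlra.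
  unfold inQ01, e, Qle, Qmult; simpl; nia.
  unfold e, Qeq, Qmult; simpl; nia.
Qed.


Lemma mh_one {A B : MVAlg} (f : A -> B) : mv_hom A B f -> f mv_one = mv_one.
Proof. intros [H1 [H2 H3]]. unfold mv_one. rewrite H2, H3. reflexivity. Qed.
Lemma mh_mul {A B : MVAlg} (f : A -> B) x y : mv_hom A B f -> f (x ⊙ y) = f x ⊙ f y.
Proof. intros [H1 [H2 H3]]. unfold mv_mul. rewrite H2, H1, !H2. reflexivity. Qed.
Lemma mh_le {A B : MVAlg} (f : A -> B) x y : mv_hom A B f -> x ≤ y -> f x ≤ f y.
Proof.
  intros Hf H. unfold mv_le in *. destruct Hf as [H1 [H2 H3]] eqn:E.
  rewrite <- H2, <- H1, H. apply mh_one; auto.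
Qed.

Lemma kernel_max {A B : MVAlg} (f : A -> B) : mv_hom A B f -> mv_simple B ->
  maximal_filter A (fun a => f a = mv_one).
Proof.
  intros Hf [Hne Hsimp].
  assert (HF : is_filter A (fun a => f a = mv_one)).
  { split; [|split].
    - apply mh_one; auto.
    - intros a b Ha Hb. rewrite mh_mul, Ha, Hb; auto. apply m1.
    - intros a b Ha Hab. apply one_le. rewrite <- Ha. apply mh_le; auto. }
  split; [split; auto|].
  - destruct Hf as [_ [_ H3]]. rewrite H3. auto.
  - intros F' [HF' Hp'] Hsub a Fa.
    set (T := fun s : B => exists a, F' a /\ f a ≤ s).
    assert (HT : is_filter B T).
    { split; [|split].
      - exists mv_one. split. apply filter_one; auto. apply le_1.
      - intros s t [a1 [Fa1 H1]] [a2 [Fa2 H2]]. exists (a1 ⊙ a2). split. apply filter_mul; auto.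
        rewrite mh_mul; auto. apply mul_mono2; auto.
      - intros s t [a1 [Fa1 H1]] Hst. exists a1. split; auto. eapply le_trans; eauto. }
    destruct (Hsimp T HT) as [H|H].
    + apply H. exists a. split; auto. apply le_refl.
    + exfalso. destruct (H mv_zero) as [b [Fb Hb]]. apply le_zero in Hb.
      apply Hp'. rewrite <- (mcompl b). apply filter_mul; auto. apply Hsub.
      destruct Hf as [H1 [H2 H3]] eqn:E. rewrite H2, Hb. reflexivity.
Qed.

Lemma separation {A : MVAlg} (c : Q -> A) x y : is_pavelka A c -> mv_semisimple A ->
  (forall F, maximal_filter A F -> (hval c F x <= hval c F y)%R) -> x ≤ y.
Proof.
  intros HP [I [S [e [Hsimp [Hhom [Hinj _]]]]]] H.
  destruct (classic (x ≤ y)) as [Hxy|Hxy]; auto. exfalso.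
  assert (Hi : exists i, e (mv_imp x y) i <> mv_one).
  { apply NNPP. intro Hn. apply Hxy. unfold mv_le. apply Hinj.
    apply functional_extensionality_dep. intro i.
    rewrite (mh_one (fun a => e a i)); auto. apply NNPP. intro H'. apply Hn. exists i. auto. }
  destruct Hi as [i Hi].
  pose proof (kernel_max (fun a => e a i) (Hhom i) (Hsimp i)) as HM.
  specialize (H _ HM).
  assert (Hv : hval c (fun a => e a i = mv_one) (mv_imp x y) <> 1%R).
  { intro E. apply (hv_one_iff c _ _ HP HM) in E. auto. }
  rewrite hv_imp in Hv; auto. apply Hv. unfold Rmin; destruct Rle_dec; rlra.
Qed.

Lemma separation_eq {A : MVAlg} (c : Q -> A) x y : is_pavelka A c -> mv_semisimple A ->
  (forall F, maximal_filter A F -> hval c F x = hval c F y) -> x = y.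
Proof.
  intros HP HS H. apply le_antisym; apply (separation c); auto; intros F HF; rewrite H; auto; rlra.
Qed.



Lemma inf_exists (E : R -> Prop) : (exists v, E v) -> (forall v, E v -> 0 <= v)%R -> exists m, is_inf E m.
Proof.
  intros [v0 Hv0] Hlb.
  set (E' := fun w => E (- w)%R).
  assert (Hb : bound E'). { exists 0%R. intros w Hw. apply Hlb in Hw. rlra. }
  assert (Hn : exists w, E' w). { exists (- v0)%R. unfold E'. rewrite Ropp_involutive. auto. }
  destruct (completeness E' Hb Hn) as [M [HM1 HM2]].
  exists (- M)%R. split.
  - intros y Hy. assert (E' (- y)%R) by (unfold E'; rewrite Ropp_involutive; auto).
    apply HM1 in H. rlra.
  - intros m' Hm'. assert (M <= - m')%R.
    { apply HM2. intros w Hw. apply Hm' in Hw. rlra. }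
    rlra.
Qed.

Lemma up_choice (u d : R) : (0 <= u <= 1)%R -> (0 < d)%R ->
  exists s, inQ01 s /\ (u <= Q2R s <= u + d)%R.
Proof.
  intros Hu Hd. destruct (Req_dec u 1) as [E|E].
  - exists 1%Q. split. unfold inQ01; qlra. rewrite Q2R1. rlra.
  - destruct (Qdense01 u (Rmin 1 (u + d))) as [s [Hs1 Hs2]]; try rmm.
    exists s. split; auto. rmm.
Qed.

Lemma meet_le_r {A : MVAlg} (a b : A) : mv_meet a b ≤ b.
Proof. rewrite meetE. apply mul_le. Qed.
Lemma meet_le_l {A : MVAlg} (a b : A) : mv_meet a b ≤ a.
Proof. rewrite meet_comm. apply meet_le_r. Qed.
Lemma meet_of_le {A : MVAlg} (a b : A) : a ≤ b -> mv_meet a b = a.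
Proof. intro H. rewrite meet_comm, meetE. unfold mv_le in H. rewrite oC, H. apply m1. Qed.

Lemma K_one {A : MVAlg} (c : Q -> A) (K : A -> A) : is_pavelka A c ->
  (forall r x, inQ01 r -> mv_imp (c r) (K x) = K (mv_imp (c r) x)) -> K mv_one = mv_one.
Proof.
  intros HP Kc. pose proof (Kc 0%Q mv_one ltac:(unfold inQ01; qlra)) as E.
  destruct HP as [H0 _]. rewrite H0, !zero_imp in E. auto.
Qed.
Lemma K_mono {A : MVAlg} (K : A -> A) x y :
  (forall x y, K (mv_meet x y) = mv_meet (K x) (K y)) -> x ≤ y -> K x ≤ K y.
Proof. intros Km H. rewrite <- (meet_of_le _ _ H), Km. apply meet_le_r. Qed.

Lemma bool_of_mult {A : MVAlg} (c : Q -> A) (K : A -> A) (h h' : A -> R) : is_pavelka A c ->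
  (forall r x, inQ01 r -> mv_imp (c r) (K x) = K (mv_imp (c r) x)) ->
  (forall x y, K x ⊙ K y ≤ K (x ⊙ y)) -> ishom A h -> ishom A h' ->
  forall m, is_inf (fun v => exists a, v = std_imp (h' (K a)) (h a)) m -> m = 0%R \/ m = 1%R.
Proof.
  intros HP Kc Kmul Hh Hh' m [Hm1 Hm2].
  assert (Tr : forall a, (0 <= std_imp (h' (K a)) (h a) <= 1)%R).
  { intro a. pose proof (hom_rng h a Hh). pose proof (hom_rng h' (K a) Hh'). unfold std_imp; rmm. }
  assert (Hle1 : (m <= 1)%R).
  { apply Rle_trans with (std_imp (h' (K mv_one)) (h mv_one)). apply Hm1. eauto. apply Tr. }
  assert (Hge0 : (0 <= m)%R).
  { apply Hm2. intros y [a ->]. apply Tr. }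
  destruct (Req_dec m 0) as [E|E]; auto. destruct (Req_dec m 1) as [E'|E']; auto.
  exfalso.
  set (D := (1 - m)%R). set (eta := (Rmin D m / 8)%R).
  assert (Heta : (0 < eta)%R) by (unfold eta, D; rmm).
  assert (Heta2 : (eta <= D / 8 /\ eta <= m / 8)%R) by (unfold eta, D; split; unfold Rmin; destruct Rle_dec; rlra).
  destruct (classic (exists a, std_imp (h' (K a)) (h a) < m + eta)%R) as [[a Ha]|Hn].
  2: { assert (m + eta <= m)%R; [|rlra]. apply Hm2. intros y [a ->].
       destruct (Rlt_le_dec (std_imp (h' (K a)) (h a)) (m + eta)); auto. exfalso; eauto. }
  set (u := h' (K a)). set (v := h a). fold u v in Ha.
  pose proof (hom_rng h a Hh) as Rv. pose proof (hom_rng h' (K a) Hh') as Ru. fold u in Ru. fold v in Rv.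
  assert (Hd : (u - v > D - eta)%R) by (unfold std_imp, D in *; rmm).
  destruct (up_choice u eta) as [s [Hs Hs2]]; auto.
  pose proof (inQ01_R' s Hs) as Rs.
  set (b := mv_imp (c s) a).
  assert (Hb1 : h' (K b) = (1 - Q2R s + u)%R).
  { unfold b. rewrite <- Kc, hom_imp, (hom_c c h'); auto. fold u. rmm. }
  assert (Hb2 : h b = (1 - Q2R s + v)%R).
  { unfold b. rewrite hom_imp, (hom_c c h); auto. fold v. rmm. }
  assert (Hb3 : (h' (K b ⊙ K b) <= h' (K (b ⊙ b)))%R) by (apply hom_le; auto).
  rewrite hom_mul, Hb1 in Hb3; auto.
  assert (Hb4 : (h (b ⊙ b) = Rmax 0 (2 * (1 - Q2R s + v) - 1))%R).
  { rewrite hom_mul, Hb2; auto. f_equal. rlra. }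
  assert (Hm3 : (m <= std_imp (h' (K (b ⊙ b))) (h (b ⊙ b)))%R) by (apply Hm1; eauto).
  rewrite Hb4 in Hm3. unfold std_imp in Hm3.
  pose proof (hom_rng h' (K (b ⊙ b)) Hh').
  unfold D in *. rmm.
Qed.

Lemma frame_sym {A : MVAlg} (K1 K2 : A -> A) (h h' : A -> R) (s : R) :
  (forall x, ¬ K1 (¬ K2 x) ≤ x) -> ishom A h -> ishom A h' -> (s <= 1)%R ->
  (forall a, s <= Rmin 1 (1 - h' (K1 a) + h a))%R ->
  (forall b, s <= Rmin 1 (1 - h (K2 b) + h' b))%R.
Proof.
  intros PT Hh Hh' Hs H b. specialize (H (¬ K2 b)).
  pose proof (hom_le h' _ _ Hh' (PT b)) as H1. rewrite hom_neg in H1; auto.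
  rewrite hom_neg in H; auto. rmm.
Qed.


Lemma zorn_pred (T:Type) (P : (T -> Prop) -> Prop) :
 (forall F : (T->Prop) -> Prop, (forall X, F X -> P X) ->
   (forall X Y, F X -> F Y -> (forall t, X t -> Y t) \/ (forall t, Y t -> X t)) ->
   P (fun t => exists X, F X /\ X t)) ->
 exists A, P A /\ forall B, (forall t, A t -> B t) -> P B -> forall t, B t -> A t.
Proof.
intros HP.
destruct (@classical_sets.Zorn_bigcup T P) as [A [PA HA]].
- intros F FP Ftot.
  specialize (HP F FP Ftot).
  replace (classical_sets.bigcup F (fun X => X)) with (fun t => exists X, F X /\ X t); [exact HP|].
  apply boolp.funext; intro t; apply boolp.propext; split.
  + intros [X [FX Xt]]. exists X; auto.
  + intros [X FX Xt]. exists X; auto.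
- exists A; split; auto.
  intros B AB PB t Bt.
  destruct (boolp.pselect (A t)) as [At|nAt]; auto.
  exfalso. apply (HA B); auto.
  split. exact AB. intro BA. apply nAt. apply BA. exact Bt.
Qed.

Lemma proper_ext {A : MVAlg} (F G : A -> Prop) : (forall w, F w <-> G w) -> proper_filter A F -> proper_filter A G.
Proof.
  intros E [[H1 [H2 H3]] Hp]. split; [split; [|split]|].
  - apply E; auto.
  - intros x y Hx Hy. apply E. apply H2; apply E; auto.
  - intros x y Hx Hxy. apply E. apply H3 with x; auto. apply E; auto.
  - intro H0. apply Hp. apply E. auto.
Qed.

Lemma extend_max {A : MVAlg} (K : A -> Prop) : proper_filter A K ->
  exists M, maximal_filter A M /\ forall w, K w -> M w.
Proof.
  intros HK.
  set (P := fun X : A -> Prop => proper_filter A (fun w => X w \/ K w)).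
  destruct (zorn_pred A P) as [A0 [PA0 HA0]].
  - intros Fm FP Ftot. unfold P. destruct HK as [[K1 [K2 K3]] Kp].
    split; [split; [|split]|].
    + right; auto.
    + intros x y Hx Hy.
      assert (Hc : forall x y, (exists X, Fm X /\ (X x \/ K x) /\ (X y \/ K y)) -> (exists X, Fm X /\ X (x ⊙ y)) \/ K (x ⊙ y)).
      { intros x' y' [X [FX [Hx' Hy']]]. destruct (FP X FX) as [[_ [HX2 _]] _].
        destruct (HX2 x' y' Hx' Hy') as [H|H]; [left; exists X; auto|right; auto]. }
      destruct Hx as [[X [FX Xx]]|Kx]; destruct Hy as [[Y [FY Yy]]|Ky].
      * destruct (Ftot X Y FX FY) as [S|S].
        apply Hc. exists Y. split; auto. 
        apply Hc. exists X. split; auto.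
      * apply Hc. exists X. auto.
      * apply Hc. exists Y. auto.
      * right; auto.
    + intros x y Hx Hxy. destruct Hx as [[X [FX Xx]]|Kx].
      * destruct (FP X FX) as [[_ [_ HX3]] _]. destruct (HX3 x y (or_introl Xx) Hxy) as [H|H]; [left; exists X; auto|right; auto].
      * right. apply K3 with x; auto.
    + intros [[X [FX X0]]|K0]; auto. destruct (FP X FX) as [_ Hp]. apply Hp; auto.
  - exists (fun w => A0 w \/ K w). split.
    + split; auto. intros F' HF' Hsub x Fx.
      assert (PF' : P F').
      { unfold P. apply proper_ext with F'; auto. intro w; split; auto. intros [H|H]; auto. }
      left. apply (HA0 F'); auto.
    + intros w Kw; right; auto.
Qed.



Definition BoolK {A : MVAlg} (c : Q -> A) (K : A -> A) : Prop :=
  forall F F', maximal_filter A F -> maximal_filter A F' -> forall eps : R, (0 < eps)%R ->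
  (forall a, eps <= Rmin 1 (1 - hval c F' (K a) + hval c F a))%R ->
  forall a, (hval c F' (K a) <= hval c F a)%R.

Lemma pw_mono {A : MVAlg} (z z' : A) n : z ≤ z' -> pw z n ≤ pw z' n.
Proof. intro H. induction n; simpl. apply le_refl. apply mul_mono2; auto. Qed.

Lemma imp_mono_r {A : MVAlg} (x a b : A) : a ≤ b -> mv_imp x a ≤ mv_imp x b.
Proof. intro H. unfold mv_imp. apply oplus_mono; auto. Qed.

Lemma mul4 {A : MVAlg} (a b c d : A) : a ⊙ b ⊙ (c ⊙ d) = a ⊙ c ⊙ (b ⊙ d).
Proof. rewrite !mA. f_equal. rewrite <- !mA. f_equal. apply mC. Qed.

Lemma hv_pw_one {A : MVAlg} (c : Q -> A) F z n : is_pavelka A c -> maximal_filter A F ->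
  hval c F z = 1%R -> hval c F (pw z n) = 1%R.
Proof.
  intros HP HM H. induction n; simpl. apply hv_F1; auto. apply filter_one; apply HM.
  rewrite hv_mul, H, IHn; auto. rmm.
Qed.

Lemma represent {A : MVAlg} (c : Q -> A) (K : A -> A) : is_pavelka A c -> mv_semisimple A ->
  (forall x y, K (mv_meet x y) = mv_meet (K x) (K y)) ->
  (forall r x, inQ01 r -> mv_imp (c r) (K x) = K (mv_imp (c r) x)) ->
  BoolK c K ->
  forall F' x t, maximal_filter A F' -> (hval c F' (K x) < t <= 1)%R ->
  exists F, maximal_filter A F /\ (forall a, hval c F' (K a) <= hval c F a)%R /\ (hval c F x < t)%R.
Proof.
  intros HP HS Km Kc HB F' x t HM' Ht.
  set (u := hval c F' (K x)).
  pose proof (hv_range c F' (K x)) as Ru. fold u in Ru.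
  destruct (Qdense01 u t) as [t' [Ht'1 Ht'2]]; try rlra. fold u in Ht. rlra.
  pose proof (inQ01_R' t' Ht'1) as Rt'.
  set (eps := (1 - t')%Q).
  assert (Heps : inQ01 eps) by (unfold eps; apply inQ01_1m; auto).
  assert (Heps0 : (0 < Q2R eps)%R) by (unfold eps; rewrite Q2R_1m; rlra).
  pose proof (inQ01_R' eps Heps) as Reps.
  set (Phi := fun a => hval c F' (K a) = 1%R).
  set (g := fun a => mv_imp (x ⊕ c eps) a).
  set (k := mv_imp x (c t')).
  set (KK := fun w => exists a n, Phi a /\ pw (g a) n ⊙ pw k n ≤ w).
  assert (Phi1 : Phi mv_one).
  { unfold Phi. rewrite (K_one c K); auto. apply hv_F1; auto. apply filter_one; apply HM'. }
  assert (Hqe' := hv_qe c F' HP HM'). pose proof (qe_hom _ _ Hqe') as Hh'.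
  assert (HKK : proper_filter A KK).
  { split; [split; [|split]|].
    - exists mv_one, O. split; auto. simpl. rewrite m1. apply le_refl.
    - intros w1 w2 [a1 [n1 [P1 H1]]] [a2 [n2 [P2 H2]]].
      exists (mv_meet a1 a2), (n1 + n2)%nat. split.
      + unfold Phi in *. rewrite Km. rewrite hom_meet, P1, P2; auto. rmm.
      + apply le_trans with ((pw (g a1) n1 ⊙ pw k n1) ⊙ (pw (g a2) n2 ⊙ pw k n2)); [|apply mul_mono2; auto].
        rewrite !pw_add. rewrite mul4. apply mul_mono2; apply mul_mono2.
        1: refine (pw_mono _ _ _ _); unfold g; apply imp_mono_r; apply meet_le_l.
        2: refine (pw_mono _ _ _ _); unfold g; apply imp_mono_r; apply meet_le_r.
        all: try apply le_refl.
    - intros w1 w2 [a [n [P1 H1]]] H2. exists a, n. split; auto. eapply le_trans; eauto.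
    - intros [a [n [P1 H1]]].
      assert (Hax : a ≤ x ⊕ c eps).
      { apply (separation c); auto. intros F'' HM''.
        pose proof (hv_range c F'' a). pose proof (hv_range c F'' x).
        rewrite hv_oplus, (hom_c c (hval c F'')); auto; [|apply (qe_hom F''), hv_qe; auto].
        destruct (Rle_lt_dec (hval c F'' a) (Rmin (hval c F'' x + Q2R eps) 1)) as [E|E]; auto.
        exfalso.
        assert (Hg : hval c F'' (g a) = 1%R).
        { unfold g. rewrite hv_imp, hv_oplus, (hom_c c (hval c F'')); auto; [|apply (qe_hom F''), hv_qe; auto]. rmm. }
        assert (Hk : hval c F'' k = 1%R).
        { unfold k. rewrite hv_imp, (hom_c c (hval c F'')); auto; [|apply (qe_hom F''), hv_qe; auto].
          unfold eps in *. rewrite Q2R_1m in *. rmm. }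
        apply le_zero in H1. assert (E2 : hval c F'' (pw (g a) n ⊙ pw k n) = 0%R) by (rewrite H1; apply hv_zero; auto).
        rewrite hv_mul, !hv_pw_one in E2; auto. rmm. }
      assert (HKa : K a ≤ K (x ⊕ c eps)) by (apply K_mono; auto).
      apply (hom_le _ _ _ Hh') in HKa. unfold Phi in P1. rewrite P1 in HKa.
      assert (Ex : x ⊕ c eps = mv_imp (c t') x).
      { unfold mv_imp. rewrite c_neg; auto. apply oC. }
      rewrite Ex, <- Kc, hom_imp, (hom_c c) in HKa; auto. fold u in HKa. rmm. }
  destruct (extend_max KK HKK) as [M [HM HKM]].
  assert (Hqe := hv_qe c M HP HM). pose proof (qe_hom _ _ Hqe) as Hh.
  exists M. split; auto. split.
  - apply (HB M F' HM HM' (Q2R eps)); auto.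
    assert (HPhi : forall b, Phi b -> (Q2R eps <= hval c M b)%R).
    { intros b Pb. assert (Mg : M (g b)).
      { apply HKM. exists b, 1%nat. split; auto. simpl. rewrite !m1. apply mul_le. }
      apply (hv_one_iff c M _ HP HM) in Mg. unfold g in Mg.
      rewrite hv_imp, hv_oplus, (hom_c c (hval c M)) in Mg; auto.
      pose proof (hv_range c M x). pose proof (hv_range c M b). rmm. }
    intro a. pose proof (hv_range c M a). pose proof (hv_range c F' (K a)).
    destruct (Rle_lt_dec (Q2R eps) (1 - hval c F' (K a) + hval c M a)) as [E|E].
    { rmm. }
    exfalso.
    destruct (Qdense01 (1 + hval c M a - Q2R eps) (hval c F' (K a))) as [s [Hs1 Hs2]]; try rlra.
    pose proof (inQ01_R' s Hs1).
    assert (Pb : Phi (mv_imp (c s) a)).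
    { unfold Phi. rewrite <- Kc, hom_imp, (hom_c c); auto. rmm. }
    apply HPhi in Pb. rewrite hom_imp, (hom_c c) in Pb; auto. rmm.
  - assert (Mk : M k).
    { apply HKM. exists mv_one, 1%nat. split; auto. simpl. rewrite !m1. apply mul_le'. }
    apply (hv_L2 c M) in Mk; auto. rlra. apply HM.
Qed.



Section T.
End T.

Lemma T2K {A : MVAlg} (c : Q -> A) (K : A -> A) : is_pavelka A c -> mv_semisimple A ->
  (forall x y, K (mv_meet x y) = mv_meet (K x) (K y)) ->
  (forall r x, inQ01 r -> mv_imp (c r) (K x) = K (mv_imp (c r) x)) ->
  BoolK c K -> forall x y, K x ⊙ K y ≤ K (x ⊙ y).
Proof.
  intros HP HS Km Kc HB x y. apply (separation c); auto. intros F' HM'.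
  rewrite hv_mul; auto.
  pose proof (hv_range c F' (K x)). pose proof (hv_range c F' (K y)). pose proof (hv_range c F' (K (x ⊙ y))).
  destruct (Rle_lt_dec (Rmax 0 (hval c F' (K x) + hval c F' (K y) - 1)) (hval c F' (K (x ⊙ y)))) as [E|E].
  { replace (Rmax 0 (hval c F' (K x) + hval c F' (K y) - 1)) with
      (1 - Rmin (1 - hval c F' (K x) + (1 - hval c F' (K y))) 1)%R in E by rmm. auto. }
  exfalso.
  destruct (represent c K HP HS Km Kc HB F' (x ⊙ y)
    ((hval c F' (K (x ⊙ y)) + Rmax 0 (hval c F' (K x) + hval c F' (K y) - 1)) / 2)%R HM')
    as [F [HM [HS' Hlt]]]. rmm.
  rewrite hv_mul in Hlt; auto. pose proof (HS' x). pose proof (HS' y). rmm.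
Qed.

Lemma T3K {A : MVAlg} (c : Q -> A) (K : A -> A) : is_pavelka A c -> mv_semisimple A ->
  (forall x y, K (mv_meet x y) = mv_meet (K x) (K y)) ->
  (forall r x, inQ01 r -> mv_imp (c r) (K x) = K (mv_imp (c r) x)) ->
  BoolK c K -> forall x y, K x ⊕ K y ≤ K (x ⊕ y).
Proof.
  intros HP HS Km Kc HB x y. apply (separation c); auto. intros F' HM'.
  rewrite hv_oplus; auto.
  pose proof (hv_range c F' (K x)). pose proof (hv_range c F' (K y)). pose proof (hv_range c F' (K (x ⊕ y))).
  destruct (Rle_lt_dec (Rmin (hval c F' (K x) + hval c F' (K y)) 1) (hval c F' (K (x ⊕ y)))) as [E|E]; auto.
  exfalso.
  destruct (represent c K HP HS Km Kc HB F' (x ⊕ y)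
    ((hval c F' (K (x ⊕ y)) + Rmin (hval c F' (K x) + hval c F' (K y)) 1) / 2)%R HM')
    as [F [HM [HS' Hlt]]]. rmm.
  rewrite hv_oplus in Hlt; auto. pose proof (HS' x). pose proof (HS' y). rmm.
Qed.

Lemma T4K {A : MVAlg} (c : Q -> A) (K : A -> A) : is_pavelka A c -> mv_semisimple A ->
  (forall x y, K (mv_meet x y) = mv_meet (K x) (K y)) ->
  (forall r x, inQ01 r -> mv_imp (c r) (K x) = K (mv_imp (c r) x)) ->
  BoolK c K -> forall x, K x ⊙ K x = K (x ⊙ x).
Proof.
  intros HP HS Km Kc HB x. apply le_antisym. apply (T2K c); auto.
  apply (separation c); auto. intros F' HM'.
  rewrite hv_mul; auto.
  set (u := hval c F' (K x)). set (w := hval c F' (K (x ⊙ x))).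
  pose proof (hv_range c F' (K x)) as Ru. pose proof (hv_range c F' (K (x ⊙ x))) as Rw. fold u in Ru. fold w in Rw.
  destruct (Rle_lt_dec w (1 - Rmin (1 - u + (1 - u)) 1)) as [E|E]; auto.
  exfalso.
  assert (Hu1 : (u < 1)%R) by rmm.
  set (d := Rmin ((w - (1 - Rmin (1 - u + (1 - u)) 1)) / 4) ((1 - u) / 2)).
  assert (Hd : (0 < d /\ d <= (w - (1 - Rmin (1 - u + (1 - u)) 1)) / 4 /\ d <= (1 - u) / 2)%R)
    by (unfold d; split; [|split]; rmm).
  destruct (represent c K HP HS Km Kc HB F' x (u + d)%R HM') as [F [HM [HS' Hlt]]]. fold u; rlra.
  pose proof (HS' (x ⊙ x)) as H2. fold w in H2. rewrite hv_mul in H2; auto.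
  pose proof (hv_range c F x). rmm.
Qed.

Lemma T5K {A : MVAlg} (c : Q -> A) (K : A -> A) : is_pavelka A c -> mv_semisimple A ->
  (forall x y, K (mv_meet x y) = mv_meet (K x) (K y)) ->
  (forall r x, inQ01 r -> mv_imp (c r) (K x) = K (mv_imp (c r) x)) ->
  BoolK c K -> forall x, K x ⊕ K x = K (x ⊕ x).
Proof.
  intros HP HS Km Kc HB x. apply le_antisym. apply (T3K c); auto.
  apply (separation c); auto. intros F' HM'.
  rewrite hv_oplus; auto.
  set (u := hval c F' (K x)). set (w := hval c F' (K (x ⊕ x))).
  pose proof (hv_range c F' (K x)) as Ru. pose proof (hv_range c F' (K (x ⊕ x))) as Rw. fold u in Ru. fold w in Rw.
  destruct (Rle_lt_dec w (Rmin (u + u) 1)) as [E|E]; auto.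
  exfalso.
  assert (Hu1 : (u + u < 1)%R) by rmm.
  set (d := ((w - (u + u)) / 4)%R).
  assert (Hd : (0 < d /\ d <= 1 / 4)%R) by (unfold d; split; rmm).
  destruct (represent c K HP HS Km Kc HB F' x (u + d)%R HM') as [F [HM [HS' Hlt]]]. fold u; rlra.
  pose proof (HS' (x ⊕ x)) as H2. fold w in H2. rewrite hv_oplus in H2; auto.
  pose proof (hv_range c F x). unfold d in *. rmm.
Qed.

Lemma BoolG_of_iii {A : MVAlg} (c : Q -> A) (G : A -> A) : is_pavelka A c ->
  natural_frame_boolean A G -> BoolK c G.
Proof.
  intros HP Hiii F F' HM HM' eps Heps H a.
  destruct (inf_exists (fun v => exists a, v = std_imp (hval c F' (G a)) (hval c F a))) as [m Hm].
  - exists (std_imp (hval c F' (G mv_one)) (hval c F mv_one)), mv_one; auto.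
  - intros v [b ->]. pose proof (hv_range c F b). pose proof (hv_range c F' (G b)). unfold std_imp; rmm.
  - destruct (Hiii F F' (hval c F) (hval c F') HM HM' (hv_qe c F HP HM) (hv_qe c F' HP HM') m Hm) as [E|E].
    + exfalso. destruct Hm as [_ Hm2]. assert (eps <= m)%R.
      { apply Hm2. intros y [b ->]. apply H. }
      rlra.
    + destruct Hm as [Hm1 _]. assert (m <= std_imp (hval c F' (G a)) (hval c F a))%R by (apply Hm1; eauto).
      unfold std_imp in *. pose proof (hv_range c F a). pose proof (hv_range c F' (G a)). rmm.
Qed.

Lemma BoolH_of_G {A : MVAlg} (c : Q -> A) (G H : A -> A) : is_pavelka A c ->
  (forall x, ¬ H (¬ G x) ≤ x) -> (forall x, ¬ G (¬ H x) ≤ x) ->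
  BoolK c G -> BoolK c H.
Proof.
  intros HP PTa PTb HB F F' HM HM' eps Heps Hyp.
  assert (Hh := qe_hom _ _ (hv_qe c F HP HM)). assert (Hh' := qe_hom _ _ (hv_qe c F' HP HM')).
  assert (Heps1 : (eps <= 1)%R) by (specialize (Hyp mv_one); rmm).
  pose proof (frame_sym H G (hval c F) (hval c F') eps PTa Hh Hh' Heps1 Hyp) as S1.
  pose proof (HB F' F HM' HM eps Heps S1) as S2.
  assert (S3 : forall b, (1 <= Rmin 1 (1 - hval c F (G b) + hval c F' b))%R).
  { intro b. specialize (S2 b). pose proof (hv_range c F (G b)). pose proof (hv_range c F' b). rmm. }
  pose proof (frame_sym G H (hval c F') (hval c F) 1%R PTb Hh' Hh (Rle_refl _) S3) as S4.
  intro a. specialize (S4 a). pose proof (hv_range c F a). pose proof (hv_range c F' (H a)). rmm.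
Qed.


Theorem theorem12 (A : MVAlg) (c : Q -> A) (G H : A -> A)
  (hT : is_tense_pavelka A c G H) (hS : mv_semisimple A) :
  let i := forall x y : A, mv_le (mv_mul (G x) (G y)) (G (mv_mul x y)) in
  let ii := forall x y : A, mv_le (mv_mul (H x) (H y)) (H (mv_mul x y)) in
  let iii := natural_frame_boolean A G in
  let iv := is_tense_mv A G H in
  (i <-> ii) /\ (i <-> iii) /\ (i <-> iv).
Proof.
  intros i ii iii iv. unfold i, ii, iii, iv. clear i ii iii iv.
  destruct hT as [HP [HGm [HHm [HGc [HHc [PTa PTb]]]]]].
  assert (i_iii : (forall x y : A, mv_le (mv_mul (G x) (G y)) (G (mv_mul x y))) -> natural_frame_boolean A G).
  { intros Hi F F' hF hF' HM HM' qF qF' m Hm.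
    exact (bool_of_mult c G hF hF' HP HGc Hi (qe_hom _ _ qF) (qe_hom _ _ qF') m Hm). }
  assert (iii_iv : natural_frame_boolean A G -> is_tense_mv A G H).
  { intros H3. pose proof (BoolG_of_iii c G HP H3) as BG.
    pose proof (BoolH_of_G c G H HP PTa PTb BG) as BH.
    split; [|split; [|split; [|split; [|split]]]].
    - split; apply (K_one c); auto.
    - intros x y; split; apply (T2K c); auto.
    - intros x y; split; apply (T3K c); auto.
    - intros x; split; apply (T4K c); auto.
    - intros x; split; apply (T5K c); auto.
    - intros x; split; auto. }
  assert (iv_i : is_tense_mv A G H -> forall x y : A, mv_le (mv_mul (G x) (G y)) (G (mv_mul x y))).
  { intros [_ [T2 _]] x y. apply T2. }
  assert (iv_ii : is_tense_mv A G H -> forall x y : A, mv_le (mv_mul (H x) (H y)) (H (mv_mul x y))).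
  { intros [_ [T2 _]] x y. apply T2. }
  assert (ii_iii : (forall x y : A, mv_le (mv_mul (H x) (H y)) (H (mv_mul x y))) -> natural_frame_boolean A G).
  { intros Hii F F' hF hF' HM HM' qF qF' m Hm.
    pose proof (qe_hom _ _ qF) as Hh. pose proof (qe_hom _ _ qF') as Hh'.
    destruct (inf_exists (fun v => exists b, v = std_imp (hF (H b)) (hF' b))) as [m' Hm'].
    - exists (std_imp (hF (H mv_one)) (hF' mv_one)), mv_one; auto.
    - intros v [b ->]. pose proof (hom_rng hF (H b) Hh). pose proof (hom_rng hF' b Hh'). unfold std_imp; rmm.
    - pose proof (bool_of_mult c H hF' hF HP HHc Hii Hh' Hh m' Hm') as Em'.
      destruct Hm as [Hm1 Hm2]. destruct Hm' as [Hm1' Hm2'].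
      assert (Hm_1 : (m <= 1)%R).
      { apply Rle_trans with (std_imp (hF' (G mv_one)) (hF mv_one)). apply Hm1; eauto.
        pose proof (hom_rng hF mv_one Hh). pose proof (hom_rng hF' (G mv_one) Hh'). unfold std_imp; rmm. }
      assert (Hm_1' : (m' <= 1)%R).
      { apply Rle_trans with (std_imp (hF (H mv_one)) (hF' mv_one)). apply Hm1'; eauto.
        pose proof (hom_rng hF (H mv_one) Hh). pose proof (hom_rng hF' mv_one Hh'). unfold std_imp; rmm. }
      assert (L1 : (m <= m')%R).
      { apply Hm2'. intros y [b ->]. unfold std_imp.
        apply (frame_sym G H hF hF' m PTb Hh Hh' Hm_1). intro a. apply Hm1. exists a; auto. }
      assert (L2 : (m' <= m)%R).
      { apply Hm2. intros y [a ->]. unfold std_imp.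
        apply (frame_sym H G hF' hF m' PTa Hh' Hh Hm_1'). intro b. apply Hm1'. exists b; auto. }
      assert (m = m') by rlra. subst m'. auto. }
  split; [|split]; split; intro HH.
  - apply iv_ii, iii_iv, i_iii, HH.
  - apply iv_i, iii_iv, ii_iii, HH.
  - apply i_iii, HH.
  - apply iv_i, iii_iv, HH.
  - apply iii_iv, i_iii, HH.
  - apply iv_i, HH.
Qed.
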